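(* Let $M$ be a smooth manifold, $\nabla$ an affine connection on $M$, and $(\hat J_1,\hat J_2,\hat J_3)$ a generalized almost quaternionic structure on $M$. If $\hat J_1$ and $\hat J_2$ are $\nabla$-integrable, then $\hat J_3$ is $\nabla$-integrable.
   Context: A generalized almost quaternionic structure: endomorphisms $\hat J_1,\hat J_2,\hat J_3$ of $TM\oplus T^*M$ with $\hat J_1^2=\hat J_2^2=\hat J_3^2=-I$, $\hat J_1\hat J_2=-\hat J_2\hat J_1$, $\hat J_3=\hat J_1\hat J_2$. The $\nabla$-bracket: $[X+\eta,Y+\beta]_\nabla:=[X,Y]+\nabla_X\beta-\nabla_Y\eta$ for vector fields $X,Y$, 1-forms $\eta,\beta$. $N^\nabla_{\hat K}(\sigma,\tau):=[\hat K\sigma,\hat K\tau]_\nabla-\hat K[\hat K\sigma,\tau]_\nabla-\hat K[\sigma,\hat K\tau]_\nabla+\hat K^2[\sigma,\tau]_\nabla$; $\hat K$ is $\nabla$-integrable if $N^\nabla_{\hat K}=0$. *)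

(* Defs.v *)
(* Abstract algebraic model of the data on a smooth manifold M:
   A  = C^oo(M) (a commutative R-algebra, R the reals),
   X  = vector fields (an A-module), Om = 1-forms (an A-module),
   act x f = x(f) (vector fields act as derivations of A),
   lie = Lie bracket of vector fields, nabla = affine connection acting on 1-forms.
   Sections of TM (+) T*M are pairs in X * Om. *)
From HB Require Import structures.
From mathcomp Require Import all_boot all_order all_algebra.
From mathcomp Require Import reals.
Set Implicit Arguments. Unset Strict Implicit. Unset Printing Implicit Defensive.
Import GRing.Theory.
Local Open Scope ring_scope.

Section ManifoldData.
Variables (R : realType) (A : comAlgType R) (X Om : lmodType A).
Variables (act : X -> A -> A) (lie : X -> X -> X) (nabla : X -> Om -> Om).

Definition vector_fields_axioms : Prop :=
  (forall x y f, act (x + y) f = act x f + act y f) /\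
      (forall x g f, act (g *: x) f = g * act x f) /\
      (forall x f g, act x (f + g) = act x f + act x g) /\
      (forall x (r : R) f, act x (r *: f) = r *: act x f) /\
      (forall x f g, act x (f * g) = f * act x g + act x f * g) /\
      (forall x y z, lie (x + y) z = lie x z + lie y z) /\
      (forall x y, lie x y = - lie y x) /\
      (forall x y z, lie x (lie y z) + lie y (lie z x) + lie z (lie x y) = 0) /\
      (forall x y f, lie x (f *: y) = f *: lie x y + act x f *: y) /\
      (forall x y f, act (lie x y) f = act x (act y f) - act y (act x f)).

Definition affine_connection : Prop :=
  (forall x y w, nabla (x + y) w = nabla x w + nabla y w) /\
      (forall x f w, nabla (f *: x) w = f *: nabla x w) /\
      (forall x w v, nabla x (w + v) = nabla x w + nabla x v) /\
      (forall x f w, nabla x (f *: w) = f *: nabla x w + act x f *: w).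

Definition nabla_bracket (s t : X * Om) : X * Om :=
  (lie s.1 t.1, nabla s.1 t.2 - nabla t.1 s.2).

Definition bundle_endo (K : X * Om -> X * Om) : Prop :=
  forall (f : A) (s t : X * Om), K (f *: s + t) = f *: K s + K t.

Definition nabla_nijenhuis (K : X * Om -> X * Om) (s t : X * Om) : X * Om :=
  nabla_bracket (K s) (K t) - K (nabla_bracket (K s) t)
  - K (nabla_bracket s (K t)) + K (K (nabla_bracket s t)).

Definition nabla_integrable (K : X * Om -> X * Om) : Prop :=
  forall s t, nabla_nijenhuis K s t = 0.

Definition gen_almost_quaternionic (J1 J2 J3 : X * Om -> X * Om) : Prop :=
  bundle_endo J1 /\ bundle_endo J2 /\ bundle_endo J3 /\
      (forall s, J1 (J1 s) = - s) /\ (forall s, J2 (J2 s) = - s) /\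
      (forall s, J3 (J3 s) = - s) /\
      (forall s, J1 (J2 s) = - J2 (J1 s)) /\
      (forall s, J3 s = J1 (J2 s)).

End ManifoldData.

(* Main.v *)
Require Import Defs.
From HB Require Import structures.
From mathcomp Require Import all_boot all_order all_algebra.
From mathcomp Require Import reals.
Import GRing.Theory.
Local Open Scope ring_scope.
Local Open Scope ring_scope.

Ltac negt t := match t with - ?a => constr:(a) | _ => constr:(- t) end.

Lemma cancA (V : zmodType) (t s s' : V) : s = - t + s' -> s' = 0 -> t + s = 0.
Proof. by move=> -> ->; rewrite addr0 subrr. Qed.
Lemma cancB (V : zmodType) (t s s' : V) : s = t + s' -> s' = 0 -> - t + s = 0.
Proof. by move=> -> ->; rewrite addr0 addNr. Qed.
Lemma pullL (V : zmodType) (h r nt S : V) : r = nt + S -> h + r = nt + (h + S).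
Proof. by move->; rewrite addrCA. Qed.
Lemma pull0 (V : zmodType) (nt : V) : nt = nt + 0.
Proof. by rewrite addr0. Qed.

Ltac pull := first [ reflexivity | eapply pull0 | (eapply pullL; pull) ].

Ltac cancel_all := repeat match goal with
  | |- ?t + ?s = 0 =>
     lazymatch t with
     | - ?a => eapply (@cancB _ a s); [pull|]
     | _ => eapply (@cancA _ t s); [pull|]
     end
  end; try reflexivity.

Section Key.
Variables (V : zmodType) (B : V -> V -> V) (I J : V -> V).
Hypotheses (BDl : forall a b c, B (a + b) c = B a c + B b c)
           (BDr : forall a b c, B a (b + c) = B a b + B a c)
           (ID : forall a b, I (a + b) = I a + I b)
           (JD : forall a b, J (a + b) = J a + J b)
           (II : forall a, I (I a) = - a) (JJ : forall a, J (J a) = - a)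
           (JI : forall a, J (I a) = - I (J a)).

Definition NN (K : V -> V) s t :=
  B (K s) (K t) - K (B (K s) t) - K (B s (K t)) + K (K (B s t)).

Lemma addN_of (f : V -> V) : (forall a b, f (a + b) = f a + f b) -> forall a, f (- a) = - f a.
Proof.
move=> fD a. have f0 : f 0 = 0.
  have h := fD 0 0; rewrite addr0 in h.
  by apply: (addrI (f 0)); rewrite addr0 -h.
by apply/eqP; rewrite -addr_eq0 -fD addNr f0.
Qed.

Let IN := @addN_of I ID.
Let JN := @addN_of J JD.
Let BNl b : forall a, B (- a) b = - B a b := @addN_of (fun a => B a b) (fun a c => BDl a c b).
Let BNr a : forall b, B a (- b) = - B a b := @addN_of (B a) (BDr a).

Lemma add0_of (f : V -> V) : (forall a b, f (a + b) = f a + f b) -> f 0 = 0.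
Proof.
move=> fD; have h := fD 0 0; rewrite addr0 in h.
by apply: (addrI (f 0)); rewrite addr0 -h.
Qed.

Lemma key : (forall s t, NN I s t = 0) -> (forall s t, NN J s t = 0) ->
  forall s t, NN (fun u => I (J u)) s t + NN (fun u => I (J u)) s t = 0.
Proof.
move=> HI HJ x y.
have E : NN (fun u => I (J u)) x y + NN (fun u => I (J u)) x y -
  (NN I x y + NN I (J x) (J y) - J (NN I x (J y)) - J (NN I (J x) y)
   + NN J x y + NN J (I x) (I y) - I (NN J x (I y)) - I (NN J (I x) y)) = 0.
  rewrite /NN.
  do 3 (repeat rewrite ?ID ?JD ?IN ?JN ?BDl ?BDr ?BNl ?BNr ?II ?JJ ?JI ?opprD ?opprK).
  rewrite -!addrA.
  cancel_all.
move: E; rewrite !HI !HJ !(@add0_of I ID) !(@add0_of J JD) !subr0 !addr0.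
by move=> E; rewrite -[RHS]E oppr0 addr0.
Qed.
End Key.

Section Main.
Variables (R : realType) (A : comAlgType R) (X Om : lmodType A).
Lemma pairD (a b : X * Om) : a + b = (a.1 + b.1, a.2 + b.2).
Proof. by []. Qed.
Lemma half0 (v : X * Om) : v + v = 0 -> v = 0.
Proof.
move=> h.
have e : ((2^-1 : R) *: (1 : A)) + ((2^-1 : R) *: 1) = 1.
  have h2 : (2^-1 + 2^-1 : R) = 1 by rewrite -div1r -(@Num.Theory.splitr R 1).
  by rewrite -scalerDl h2 scale1r.
by rewrite -[v]scale1r -e scalerDl -scalerDr h scaler0.
Qed.
End Main.

Theorem proposition2p11 (R : realType) (A : comAlgType R) (X Om : lmodType A)
  (act : X -> A -> A) (lie : X -> X -> X) (nabla : X -> Om -> Om)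
  (HM : vector_fields_axioms act lie) (Hnabla : affine_connection act nabla)
  (J1 J2 J3 : X * Om -> X * Om)
  (HJ : gen_almost_quaternionic J1 J2 J3) :
  nabla_integrable lie nabla J1 -> nabla_integrable lie nabla J2 ->
  nabla_integrable lie nabla J3.
Proof.
move=> H1 H2.
case: HM => [actD [actZ [actDr [actZr [actM [lieDl [lieN [jac [lieZ lieact]]]]]]]]].
case: Hnabla => [nDl [nZ [nDr nL]]].
case: HJ => [e1 [e2 [e3 [J11 [J22 [J33 [J12 HJ3]]]]]]].
pose B := nabla_bracket lie nabla.
have BDl : forall a b c, B (a + b) c = B a c + B b c.
  move=> [a1 a2] [b1 b2] [c1 c2]; rewrite /B /nabla_bracket !pairD /=.
  by rewrite lieDl nDl nDr opprD addrACA.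
have BDr : forall a b c, B a (b + c) = B a b + B a c.
  move=> [a1 a2] [b1 b2] [c1 c2]; rewrite /B /nabla_bracket !pairD /=.
  by rewrite lieN lieDl opprD -!lieN nDl nDr opprD addrACA.
have ID : forall a b, J1 (a + b) = J1 a + J1 b.
  by move=> a b; have := e1 1 a b; rewrite !scale1r.
have JD : forall a b, J2 (a + b) = J2 a + J2 b.
  by move=> a b; have := e2 1 a b; rewrite !scale1r.
have JI : forall a, J2 (J1 a) = - J1 (J2 a).
  by move=> a; rewrite J12 opprK.
have K := @key _ B J1 J2 BDl BDr ID JD J11 J22 JI H1 H2.
move=> s t; apply: half0.
have -> : nabla_nijenhuis lie nabla J3 s t = NN _ B (fun u => J1 (J2 u)) s t.
  by rewrite /nabla_nijenhuis /NN !HJ3.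
exact: K.
Qed.
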